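(* Let $k\ge1$ and let $a\ge b$ be the dimensions of irreducible algebraic sets $A,B\subset\mathbb{C}^k$; put $m=2k-a-b$. Let $h^*$ and $h_0$ be integers with $b\ge h^*>\dim(A\cap B)$ and $\max(a+b-k,0)\le h_0\le$ the minimum dimension of any irreducible component of $A\cap B$. Let $\mathbb A\in\mathbb{C}^{(a+b)\times k}$, $\mathbf B\in\mathbb{C}^{(a+b)\times k}$, $\mathbf C\in\mathbb{C}^{k\times 2k}$ be generic, set $\mathbf A=[\mathbb A\ \ -\mathbb A]\in\mathbb{C}^{(a+b)\times 2k}$, and for $0\le h\le k$ let $\mathbf Y_h=\mathbf A+\mathbf B\mathbf P_h\mathbf C\in\mathbb{C}^{(a+b)\times 2k}$. Then for any integers $j,i$ with $h_0\le j<i\le h^*$ there exist matrices $E\in\mathbb{C}^{2k\times(m-i+j)}$ and $F,G\in\mathbb{C}^{2k\times(i-j)}$ such that (1) the columns of $[E\ \ F]$ form a basis of the null space of $\mathbf Y_i$; (2) the columns of $[E\ \ G]$ form a basis of the null space of $\mathbf Y_j$; (3) $\mathbf P_{ji}\mathbf C F=\mathbf P_{ji}\mathbf C G$ equals the $k\times(i-j)$ matrix whose rows $j+1,\dots,i$ form the identity matrix $I_{i-j}$ and whose other rows are zero.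
   Context: For $0\le h\le k$, $\mathbf P_h=\mathrm{diag}(1,\dots,1,0,\dots,0)$ is the $k\times k$ diagonal matrix with $h$ ones followed by $k-h$ zeros. For $0\le j\le i\le k$, $\mathbf P_{ji}=\mathrm{diag}(0,\dots,0,1,\dots,1,0,\dots,0)$ is the $k\times k$ diagonal matrix with $j$ zeros, then $i-j$ ones, then $k-i$ zeros (so $\mathbf P_j+\mathbf P_{ji}=\mathbf P_i$). ''Generic'' means for all choices outside a proper algebraic subset of the parameter space (e.g. random complex entries). *)

(* Defs.v *)
From HB Require Import structures.
From mathcomp Require Import all_boot all_order all_algebra.
From mathcomp Require Import Rstruct complex.
From mathcomp Require Import mpoly.

Set Implicit Arguments.
Unset Strict Implicit.
Unset Printing Implicit Defensive.

Import GRing.Theory Num.Theory.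
Local Open Scope ring_scope.

Notation CC := (complex Rdefinitions.R).

Definition pt (n : nat) := 'I_n -> CC.
Definition subset_of n (S T : pt n -> Prop) := forall x, S x -> T x.
Definition same_set n (S T : pt n -> Prop) := forall x, S x <-> T x.
Definition strict_subset n (S T : pt n -> Prop) :=
  subset_of S T /\ ~ subset_of T S.
Definition setI_ n (S T : pt n -> Prop) : pt n -> Prop := fun x => S x /\ T x.

Definition zero_set n (P : seq {mpoly CC[n]}) : pt n -> Prop :=
  fun x => forall p, p \in P -> p.@[x] = 0.
Definition algebraic_set n (S : pt n -> Prop) :=
  exists P : seq {mpoly CC[n]}, same_set S (zero_set P).

Definition irreducible_alg n (S : pt n -> Prop) :=
  [/\ algebraic_set S, (exists x, S x) &
      forall S1 S2 : pt n -> Prop, algebraic_set S1 -> algebraic_set S2 ->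
        same_set S (fun x => S1 x \/ S2 x) ->
        same_set S S1 \/ same_set S S2].

Definition has_chain n (S : pt n -> Prop) (d : nat) :=
  exists Z : nat -> pt n -> Prop,
    [/\ forall l, (l <= d)%N -> irreducible_alg (Z l),
        forall l, (l < d)%N -> strict_subset (Z l) (Z l.+1) &
        subset_of (Z d) S].

Definition alg_dim n (S : pt n -> Prop) (d : nat) :=
  has_chain S d /\ ~ has_chain S d.+1.

Definition irr_component n (S W : pt n -> Prop) :=
  [/\ irreducible_alg W, subset_of W S &
      forall W', irreducible_alg W' -> subset_of W W' -> subset_of W' S ->
        subset_of W' W].

(* Genericity for a property of a triple of complex matrices: it holds for
   all parameters outside a proper algebraic subset of the parameter space
   C^(m1 n1 + m2 n2 + m3 n3) (entries listed via mxvec). *)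
Definition params m1 n1 m2 n2 m3 n3
  (X : 'M[CC]_(m1, n1)) (Y : 'M[CC]_(m2, n2)) (Z : 'M[CC]_(m3, n3)) :
  pt (m1 * n1 + m2 * n2 + m3 * n3) :=
  fun t => row_mx (row_mx (mxvec X) (mxvec Y)) (mxvec Z) 0 t.

Definition generic3 m1 n1 m2 n2 m3 n3
  (Q : 'M[CC]_(m1, n1) -> 'M[CC]_(m2, n2) -> 'M[CC]_(m3, n3) -> Prop) :=
  exists Zs : pt (m1 * n1 + m2 * n2 + m3 * n3) -> Prop,
    [/\ algebraic_set Zs, (exists x, ~ Zs x) &
        forall X Y Z, ~ Zs (params X Y Z) -> Q X Y Z].

Definition Pmx (k h : nat) : 'M[CC]_k := diag_mx (\row_(r < k) ((r < h)%N)%:R).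
Definition Pjimx (k j i : nat) : 'M[CC]_k :=
  diag_mx (\row_(r < k) ((j <= r)%N && (r < i)%N)%:R).

Definition boldA p k (AA : 'M[CC]_(p, k)) : 'M[CC]_(p, k + k) := row_mx AA (- AA).
Definition Ymx p k (AA BB : 'M[CC]_(p, k)) (Cm : 'M[CC]_(k, k + k)) (h : nat)
  : 'M[CC]_(p, k + k) := boldA AA + BB *m Pmx k h *m Cm.

(* k x (i-j) matrix whose rows j+1..i (1-based) form I_{i-j}, others zero. *)
Definition Jmx (k j i : nat) : 'M[CC]_(k, i - j) :=
  \matrix_(r < k, c < i - j) ((r : nat) == j + c)%N%:R.

Definition col_basis_of_null p q r (Y : 'M[CC]_(p, q)) (M : 'M[CC]_(q, r)) :=
  [/\ Y *m M = 0,
      forall v : 'cV[CC]_q, Y *m v = 0 -> exists c : 'cV[CC]_r, v = M *m c &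
      forall c : 'cV[CC]_r, M *m c = 0 -> c = 0].

(* Main.v *)
Require Import Defs.
From HB Require Import structures.
From mathcomp Require Import all_boot all_order all_algebra.
From mathcomp Require Import Rstruct complex.
From mathcomp Require Import mpoly.
From mathcomp Require Import zify.
Import GRing.Theory Num.Theory.
Local Open Scope ring_scope.

Lemma kernel_basis (p n r : nat) (M : 'M[CC]_(p, n)) :
  n = (p + r)%N -> row_free M ->
  exists E : 'M[CC]_(n, r),
    [/\ M *m E = 0,
        forall v : 'cV[CC]_n, M *m v = 0 -> exists c : 'cV[CC]_r, v = E *m c &
        forall c : 'cV[CC]_r, E *m c = 0 -> c = 0].
Proof.
move=> en Mf.
set K := kermx M^T.
have rK : \rank K = r.
  rewrite /K mxrank_ker mxrank_tr (eqP Mf) en. by rewrite addKn.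
have key : forall s (e : \rank K = s),
    ((pid_mx s *m row_ebase K : 'M_(s, n)) :=: K)%MS /\ row_free (pid_mx s *m row_ebase K : 'M_(s, n)).
  by move=> s <-; split; [exact: eq_row_base | exact: row_base_free].
have [eqEE fEE] := key r rK.
set EE := (pid_mx r *m row_ebase K : 'M_(r, n)) in eqEE fEE.
exists EE^T; split.
- apply: trmx_inj; rewrite trmx_mul trmxK trmx0; apply/sub_kermxP.
  by rewrite eqEE submx_refl.
- move=> v Mv.
  have : (v^T <= K)%MS by apply/sub_kermxP; rewrite -trmx_mul Mv trmx0.
  rewrite -eqEE => /submxP [D vD].
  by exists D^T; rewrite -[v]trmxK vD trmx_mul.
- move=> c Ec.
  have : c^T *m EE = 0 *m EE by rewrite mul0mx -[EE]trmxK -trmx_mul Ec trmx0.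
  move/(row_free_inj fEE) => h. by rewrite -[c]trmxK h trmx0.
Qed.

Lemma rinv_F p q n (Y : 'M[CC]_(p, n)) (T : 'M[CC]_(q, n)) :
  row_free (col_mx Y T) -> exists Fm : 'M[CC]_(n, q), Y *m Fm = 0 /\ T *m Fm = 1%:M.
Proof.
case/row_freeP => R hR.
exists (R *m col_mx 0 1%:M).
have := congr1 (mulmx^~ (col_mx (0 : 'M_(p, q)) 1%:M)) hR.
rewrite /= mul1mx -mulmxA mul_col_mx => /eq_col_mx [h1 h2]; by split.
Qed.

Lemma core p q r n (Yi Yj : 'M[CC]_(p, n)) (T : 'M[CC]_(q, n)) (X : 'M[CC]_(p, q)) :
  n = (p + q + r)%N -> Yi = Yj + X *m T ->
  row_free (col_mx Yi T) -> row_free (col_mx Yj T) ->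
  exists (E : 'M[CC]_(n, r)) (Fm G : 'M[CC]_(n, q)),
   [/\ col_basis_of_null Yi (row_mx E Fm), col_basis_of_null Yj (row_mx E G),
       T *m Fm = 1%:M & T *m G = 1%:M].
Proof.
move=> en eY fi fj.
have [E [E0 Esp Einj]] := @kernel_basis (p + q) n r _ en fi.
have [Fm [YF TF]] := rinv_F _ _ _ _ _ fi.
have [G [YG TG]] := rinv_F _ _ _ _ _ fj.
have [YiE TE] : Yi *m E = 0 /\ T *m E = 0.
  by apply/eq_col_mx; rewrite col_mx0 -mul_col_mx.
have YjE : Yj *m E = 0.
  by have := YiE; rewrite eY mulmxDl -mulmxA TE mulmx0 addr0.
have gen : forall (Y : 'M[CC]_(p, n)) (H : 'M[CC]_(n, q)),
   Y *m E = 0 -> Y *m H = 0 -> T *m H = 1%:M ->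
   (forall w : 'cV[CC]_n, Y *m w = 0 -> T *m w = 0 -> Yi *m w = 0) ->
   col_basis_of_null Y (row_mx E H).
  move=> Y H YE YH TH hw; split.
  - by rewrite mul_mx_row YE YH row_mx0.
  - move=> v Yv.
    set w := v - H *m (T *m v).
    have Tw : T *m w = 0 by rewrite /w mulmxBr [T *m (H *m _)]mulmxA TH mul1mx subrr.
    have Yw : Y *m w = 0 by rewrite /w mulmxBr Yv [Y *m (H *m _)]mulmxA YH mul0mx subrr.
    have [c wc] : exists c, w = E *m c.
      by apply: Esp; rewrite mul_col_mx (hw _ Yw Tw) Tw col_mx0.
    exists (col_mx c (T *m v)); rewrite mul_row_col -wc /w.
    by rewrite subrK.
  - move=> c.
    rewrite -[c]vsubmxK mul_row_col => h.
    have h2 : dsubmx c = 0.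
      have := congr1 (mulmx T) h.
      by rewrite mulmx0 mulmxDr !mulmxA TE TH mul0mx mul1mx add0r.
    move: h; rewrite h2 mulmx0 addr0 => /Einj ->.
    by rewrite col_mx0.
exists E, Fm, G; split => //.
- apply: gen => // w Yw Tw //.
- apply: gen => // w Yw Tw.
  by rewrite eY mulmxDl Yw -mulmxA Tw mulmx0 addr0.
Qed.

Definition Smx k j q : 'M[CC]_(q, k) := \matrix_(c < q, r < k) ((r : nat) == j + c)%N%:R.
Definition AA0 p k : 'M[CC]_(p, k) := \matrix_(r < p, c < k) ((r : nat) == c)%N%:R.
Definition BB0 p k : 'M[CC]_(p, k) := \matrix_(r < p, c < k) ((r : nat) == k + c)%N%:R.
Definition C0 k : 'M[CC]_(k, k + k) := row_mx 0 1%:M.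
Definition R0 p k j q : 'M[CC]_(k + k, p + q) :=
  let U := col_mx (AA0 p k) (0 : 'M_(q, k)) in
  let V := col_mx (BB0 p k) (Smx k j q) in col_mx (U^T + V^T) V^T.

Lemma sum_single {n} {g : 'I_n -> CC} (c0 : 'I_n) :
  (forall c, c != c0 -> g c = 0) -> \sum_c g c = g c0.
Proof.
move=> h; rewrite (bigD1 c0) //= big1 ?addr0 // => c /h; done.
Qed.

Lemma natr_false (b : bool) : b = false -> (b%:R : CC) = 0.
Proof. by move=> ->. Qed.

Lemma StS k j i : (j <= i)%N -> (i <= k)%N ->
  (Smx k j (i - j))^T *m Smx k j (i - j) = Pjimx k j i.
Proof.
move=> ji ik; apply/matrixP => r r'; rewrite !mxE.
case: (boolP ((j <= r)%N && (r < i)%N)) => /andP.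
- case=> jr ri.
  have lt : (r - j < i - j)%N by lia.
  rewrite (sum_single (Ordinal lt)) => [|c cne]; rewrite !mxE /=.
    rewrite subnKC // eqxx mul1r eq_sym.
    done.
  rewrite (@natr_false (_ == _)) ?mul0r //.
  apply/eqP => e; move/eqP: cne; apply; apply/val_inj => /=; lia.
- move=> nr; rewrite big1 => [|c _].
    by rewrite mul0rn.
  rewrite !mxE (@natr_false (_ == _)) ?mul0r //.
  apply/eqP => e; apply: nr; have := ltn_ord c; lia.
Qed.

Lemma Pmx_split k j i : (j <= i)%N -> Pmx k i = Pmx k j + Pjimx k j i.
Proof.
move=> ji; apply/matrixP => r c; rewrite !mxE.
case: (r == c :> 'I_k); last by rewrite !mulr0n addr0.
rewrite !mulr1n; have [rj|jr] := ltnP r j => /=.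
  by rewrite (leq_trans rj ji) addr0.
by rewrite add0r.
Qed.

Lemma Ymx_split p k (AA BB : 'M[CC]_(p, k)) Cm j i : (j <= i)%N -> (i <= k)%N ->
  Ymx AA BB Cm i = Ymx AA BB Cm j + (BB *m (Smx k j (i - j))^T) *m (Smx k j (i - j) *m Cm).
Proof.
move=> ji ik; rewrite /Ymx (Pmx_split k j i ji) -StS // mulmxDr mulmxDl addrA !mulmxA.
done.
Qed.

Lemma PCF_J k j i (Cm : 'M[CC]_(k, k + k)) (F : 'M[CC]_(k + k, i - j)) :
  (j <= i)%N -> (i <= k)%N -> Smx k j (i - j) *m Cm *m F = 1%:M ->
  Pjimx k j i *m Cm *m F = Jmx k j i.
Proof.
move=> ji ik h; rewrite -StS // -!mulmxA (mulmxA (Smx _ _ _)) h mulmx1.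
by apply/matrixP => r c; rewrite !mxE.
Qed.

Lemma BB0P p k h : (p <= k + h)%N -> BB0 p k *m Pmx k h = BB0 p k.
Proof.
move=> ph; rewrite /Pmx mul_mx_diag; apply/matrixP => r c; rewrite !mxE.
case: eqP => [e|_]; last by rewrite mul0r.
have : (c < h)%N by have := ltn_ord r; lia.
by move=> ->; rewrite mulr1.
Qed.

Lemma AAt p k : (p <= k + k)%N ->
  AA0 p k *m (AA0 p k)^T + BB0 p k *m (BB0 p k)^T = 1%:M.
Proof.
move=> pk; apply/matrixP => r r'; rewrite !mxE.
have [rk|kr] := ltnP r k.
- rewrite (sum_single (Ordinal rk)) => [|c cne]; last first.
    rewrite !mxE (@natr_false (_ == _)) ?mul0r //.
    apply/eqP => e; move/eqP: cne; apply; apply/val_inj => /=; lia.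
  rewrite big1 => [|c _]; last first.
    rewrite !mxE (@natr_false (_ == _)) ?mul0r //; apply/eqP => e; lia.
  rewrite !mxE /= eqxx mul1r addr0 eq_sym.
  done.
- have lt : (r - k < k)%N by have := ltn_ord r; lia.
  rewrite big1 => [|c _]; last first.
    rewrite !mxE (@natr_false ((r : nat) == c)%N) ?mul0r //; apply/eqP => e; have := ltn_ord c; lia.
  rewrite (sum_single (Ordinal lt)) => [|c cne]; last first.
    rewrite !mxE (@natr_false ((r : nat) == k + c)%N) ?mul0r //.
    apply/eqP => e; move/eqP: cne; apply; apply/val_inj => /=; lia.
  rewrite !mxE /= subnKC // eqxx mul1r add0r eq_sym.
  done.
Qed.

Lemma BSt p k j q : (p <= k + j)%N -> BB0 p k *m (Smx k j q)^T = 0.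
Proof.
move=> pk; apply/matrixP => r c; rewrite !mxE.
apply: big1 => c' _; rewrite !mxE.
case: (boolP ((r : nat) == k + c')%N) => [/eqP e|_]; last by rewrite mul0r.
rewrite (@natr_false ((c' : nat) == j + c)%N) ?mulr0 //.
apply/eqP => e2; have := ltn_ord r; lia.
Qed.

Lemma SSt k j q : (j + q <= k)%N -> Smx k j q *m (Smx k j q)^T = 1%:M.
Proof.
move=> jqk; apply/matrixP => c c'; rewrite !mxE.
have lt : (j + c < k)%N by have := ltn_ord c; lia.
rewrite (sum_single (Ordinal lt)) => [|r rne]; last first.
  rewrite !mxE (@natr_false ((r : nat) == j + c)%N) ?mul0r //.
  apply/eqP => e; move/eqP: rne; apply; apply/val_inj => /=; lia.
rewrite !mxE /= eqxx mul1r eqn_add2l eq_sym.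
congr (_ %:R); case: (c =P c') => [->|ne]; first by rewrite eqxx.
have nn : (c' : nat) <> c by move=> e; apply: ne; apply/val_inj. 
by move: nn; case: eqP.
Qed.

Lemma wit_ok p k j i h : (p <= k + j)%N -> (j < i)%N -> (i <= k)%N -> (j <= h)%N ->
  col_mx (Ymx (AA0 p k) (BB0 p k) (C0 k) h) (Smx k j (i - j) *m C0 k) *m R0 p k j (i - j)
  = 1%:M.
Proof.
move=> pj ji ik jh.
set S := Smx k j (i - j).
have eY : Ymx (AA0 p k) (BB0 p k) (C0 k) h = row_mx (AA0 p k) (BB0 p k - AA0 p k).
  rewrite /Ymx /boldA /C0 mul_mx_row mulmx0 mulmx1 BB0P; last by lia.
  by rewrite add_row_mx addr0 addrC.
have eS : S *m C0 k = row_mx 0 S by rewrite /C0 mul_mx_row mulmx0 mulmx1.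
rewrite eY eS.
set U := col_mx (AA0 p k) (0 : 'M_(i - j, k)).
set V := col_mx (BB0 p k) S.
have -> : col_mx (row_mx (AA0 p k) (BB0 p k - AA0 p k)) (row_mx 0 S) = row_mx U (V - U).
  rewrite /U /V opp_col_mx add_col_mx oppr0 addr0.
  by rewrite -[LHS]/(block_mx _ _ _ _) block_mxEh.
rewrite /R0 -/U -/V mul_row_col mulmxDr mulmxBl -addrA (addrC (U *m V^T)) subrK.
rewrite /U /V !tr_col_mx trmx0 !mul_col_row add_block_mx !mulmx0 !mul0mx.
rewrite AAt; last by lia.
have StB : S *m (BB0 p k)^T = 0 by rewrite -[S]trmxK -trmx_mul BSt // trmx0.
rewrite BSt // StB SSt; last by lia.
by rewrite !addr0 add0r -scalar_mx_block.
Qed.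

Definition Vg m1 n1 m2 n2 m3 n3 : 'rV[{mpoly CC[m1 * n1 + m2 * n2 + m3 * n3]}]_(m1 * n1 + m2 * n2 + m3 * n3) :=
  \row_t 'X_t.

Lemma evA m1 n1 m2 n2 m3 n3 (X : 'M[CC]_(m1, n1)) (Y : 'M[CC]_(m2, n2)) (Z : 'M[CC]_(m3, n3)) :
  map_mx (meval (params X Y Z)) (vec_mx (lsubmx (lsubmx (Vg m1 n1 m2 n2 m3 n3)))) = X.
Proof.
apply/matrixP => r c; rewrite mxE.
rewrite /vec_mx mxE.
rewrite /lsubmx mxE mxE.
rewrite /Vg mxE mevalXU /params.
by rewrite !row_mxEl mxvecE.
Qed.

Lemma evB m1 n1 m2 n2 m3 n3 (X : 'M[CC]_(m1, n1)) (Y : 'M[CC]_(m2, n2)) (Z : 'M[CC]_(m3, n3)) :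
  map_mx (meval (params X Y Z)) (vec_mx (rsubmx (lsubmx (Vg m1 n1 m2 n2 m3 n3)))) = Y.
Proof.
apply/matrixP => r c; rewrite mxE.
rewrite /vec_mx mxE.
rewrite /rsubmx mxE /lsubmx mxE.
rewrite /Vg mxE mevalXU /params.
by rewrite row_mxEl row_mxEr mxvecE.
Qed.

Lemma evC m1 n1 m2 n2 m3 n3 (X : 'M[CC]_(m1, n1)) (Y : 'M[CC]_(m2, n2)) (Z : 'M[CC]_(m3, n3)) :
  map_mx (meval (params X Y Z)) (vec_mx (rsubmx (Vg m1 n1 m2 n2 m3 n3))) = Z.
Proof.
apply/matrixP => r c; rewrite mxE.
rewrite /vec_mx mxE.
rewrite /rsubmx mxE.
rewrite /Vg mxE mevalXU /params.
by rewrite row_mxEr mxvecE.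
Qed.

Lemma ev_det N (x : 'I_N -> CC) n (M : 'M[{mpoly CC[N]}]_n) :
  (\det M).@[x] = \det (map_mx (meval x) M).
Proof. by rewrite det_map_mx. Qed.

Definition cst N m n (A : 'M[CC]_(m, n)) : 'M[{mpoly CC[N]}]_(m, n) :=
  map_mx (fun c => c%:MP) A.
Arguments cst N {m n} A.

Definition MPg N p k (AAg BBg : 'M[{mpoly CC[N]}]_(p, k)) (Cg : 'M[{mpoly CC[N]}]_(k, k + k))
  (j i h : nat) : 'M[{mpoly CC[N]}]_(p + (i - j), k + k) :=
  col_mx (row_mx AAg (- AAg) + BBg *m cst N (Pmx k h) *m Cg) (cst N (Smx k j (i - j)) *m Cg).
Arguments MPg {N p k} AAg BBg Cg j i h.

Definition Qg N p k (AAg BBg : 'M[{mpoly CC[N]}]_(p, k)) (Cg : 'M[{mpoly CC[N]}]_(k, k + k))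
  (j i : nat) : {mpoly CC[N]} :=
  \det (MPg AAg BBg Cg j i i *m cst N (R0 p k j (i - j)))
  * \det (MPg AAg BBg Cg j i j *m cst N (R0 p k j (i - j))).
Arguments Qg {N p k} AAg BBg Cg j i.

Lemma ev_cst {N} (x : 'I_N -> CC) m n (A : 'M[CC]_(m, n)) : map_mx (meval x) (cst N A) = A.
Proof. by apply/matrixP => r c; rewrite !mxE mevalC. Qed.

Lemma ev_MP N (x : 'I_N -> CC) p k (AAg BBg : 'M[{mpoly CC[N]}]_(p, k)) (Cg : 'M[{mpoly CC[N]}]_(k, k + k)) j i h :
  map_mx (meval x) (MPg AAg BBg Cg j i h) =
  col_mx (Ymx (map_mx (meval x) AAg) (map_mx (meval x) BBg) (map_mx (meval x) Cg) h)
         (Smx k j (i - j) *m map_mx (meval x) Cg).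
Proof.
by rewrite /MPg map_col_mx map_mxD map_row_mx map_mxN !map_mxM !ev_cst.
Qed.

Lemma evM' N (x : 'I_N -> CC) (P1 P2 : {mpoly CC[N]}) : (P1 * P2).@[x] = P1.@[x] * P2.@[x].
Proof. exact: mevalM. Qed.

Lemma ev_Q N (x : 'I_N -> CC) p k (AAg BBg : 'M[{mpoly CC[N]}]_(p, k)) (Cg : 'M[{mpoly CC[N]}]_(k, k + k)) j i :
  (Qg AAg BBg Cg j i).@[x] =
   \det (col_mx (Ymx (map_mx (meval x) AAg) (map_mx (meval x) BBg) (map_mx (meval x) Cg) i)
         (Smx k j (i - j) *m map_mx (meval x) Cg) *m R0 p k j (i - j)) *
   \det (col_mx (Ymx (map_mx (meval x) AAg) (map_mx (meval x) BBg) (map_mx (meval x) Cg) j)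
         (Smx k j (i - j) *m map_mx (meval x) Cg) *m R0 p k j (i - j)).
Proof.
rewrite /Qg evM'. rewrite [X in X * _]ev_det. rewrite [X in _ * X]ev_det. congr (_ * _); rewrite map_mxM ev_MP ev_cst; done. Qed.


Lemma det_rf p n (M : 'M[CC]_(p, n)) (R : 'M[CC]_(n, p)) : \det (M *m R) != 0 -> row_free M.
Proof.
move=> d; apply/row_freeP; exists (R *m invmx (M *m R)).
by rewrite mulmxA mulmxV // unitmxE unitfE.
Qed.

Lemma ev_prod N (x : 'I_N -> CC) (I : Type) (r : seq I) (Pr : pred I) (F : I -> {mpoly CC[N]}) :
  (\prod_(i <- r | Pr i) F i).@[x] = \prod_(i <- r | Pr i) (F i).@[x].
Proof. exact: rmorph_prod. Qed.

Theorem lemma2p2 (k a b : nat) (A B : pt k -> Prop) (hs h0 : nat) :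
  (1 <= k)%N ->
  irreducible_alg A -> irreducible_alg B ->
  alg_dim A a -> alg_dim B b -> (b <= a)%N ->
  (hs <= b)%N ->
  (forall d, has_chain (setI_ A B) d -> (d < hs)%N) ->
  (a + b - k <= h0)%N ->
  (forall W d, irr_component (setI_ A B) W -> alg_dim W d -> (h0 <= d)%N) ->
  generic3 (fun (AA : 'M[CC]_(a + b, k)) (BB : 'M[CC]_(a + b, k))
                (Cm : 'M[CC]_(k, k + k)) =>
    forall j i : nat, (h0 <= j)%N -> (j < i)%N -> (i <= hs)%N ->
      exists (E : 'M[CC]_(k + k, (k + k - a - b) - (i - j)))
             (F G : 'M[CC]_(k + k, i - j)),
        [/\ col_basis_of_null (Ymx AA BB Cm i) (row_mx E F),
            col_basis_of_null (Ymx AA BB Cm j) (row_mx E G),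
            Pjimx k j i *m Cm *m F = Jmx k j i &
            Pjimx k j i *m Cm *m G = Jmx k j i]).
Proof.
move=> k1 _ _ _ _ ba hsb _ h0le _; clear A B.
pose AAg := vec_mx (lsubmx (lsubmx (Vg (a + b) k (a + b) k k (k + k)))).
pose BBg := vec_mx (rsubmx (lsubmx (Vg (a + b) k (a + b) k k (k + k)))).
pose Cg := vec_mx (rsubmx (Vg (a + b) k (a + b) k k (k + k))).
pose P := \prod_(j < hs.+1) \prod_(i < hs.+1 | (h0 <= j)%N && (j < i)%N) Qg AAg BBg Cg j i.
have evQ : forall X Y Z j i, (Qg AAg BBg Cg j i).@[params X Y Z] =
   \det (col_mx (Ymx X Y Z i) (Smx k j (i - j) *m Z) *m R0 (a + b) k j (i - j)) *
   \det (col_mx (Ymx X Y Z j) (Smx k j (i - j) *m Z) *m R0 (a + b) k j (i - j)).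
  by move=> X Y Z j i; rewrite ev_Q evA evB evC.
exists (fun x => P.@[x] = 0); split.
- exists [:: P] => x; split => [h q|h].
    by rewrite inE => /eqP ->.
  by apply: h; exact: mem_head.
- exists (params (AA0 (a + b) k) (BB0 (a + b) k) (C0 k)).
  apply/eqP; rewrite /P ev_prod big1 ?oner_eq0 // => j _.
  rewrite ev_prod big1 // => i /andP [hj ji].
  have hi := ltn_ord i; have hj' := ltn_ord j.
  rewrite evQ !wit_ok ?det1 ?mulr1 //; lia.
- move=> X Y Z hP j i hj ji ihs.
  have hi : (i < hs.+1)%N by lia.
  have hj2 : (j < hs.+1)%N by lia.
  have : P.@[params X Y Z] != 0 by apply/eqP.
  rewrite /P ev_prod => /prodf_neq0 /(_ (Ordinal hj2) isT).
  rewrite ev_prod => /prodf_neq0 /(_ (Ordinal hi)) /=.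
  rewrite hj ji => /(_ isT).
  rewrite evQ mulf_eq0 negb_or => /andP [/det_rf fi /det_rf fj].
  have ik : (i <= k)%N by lia.
  have [E [Fm [G [bi bj TF TG]]]] :=
    @core (a + b) (i - j) ((k + k - a - b) - (i - j)) (k + k) (Ymx X Y Z i) (Ymx X Y Z j)
      (Smx k j (i - j) *m Z) (Y *m (Smx k j (i - j))^T) ltac:(lia)
      (Ymx_split _ _ _ _ _ _ _ (ltnW ji) ik) fi fj.
  exists E, Fm, G; split => //; apply: PCF_J => //; try exact: ltnW.
Qed.
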